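(* Suppose $\tau_f\in(\tau_2^i,\tau_c)$. Then $$p'(\tau)<\frac{2h(\tau)-2h(\tau_f)}{\tau^2-\tau_f^2}<p'(\tau_f)\quad\text{for }\tau\in\big(1,\tau_{pr}(\tau_{po}(\tau_f))\big).$$ Moreover, for any $\tau_b\in(1,\tau_{pr}(\tau_{po}(\tau_f)))$, Liu's extended entropy condition $\frac{2h(\tau_f)-2h(\tau_b)}{\tau_f^2-\tau_b^2}<\frac{2h(\tau_f)-2h(\tau)}{\tau_f^2-\tau^2}$ for all $\tau\in(\tau_b,\tau_f)$ holds.
   Context: The pressure is $p(\tau)=\frac{\mathcal S}{(\tau-1)^\gamma}-\frac{1}{\tau^2}$ for $\tau>1$, with constants $1<\gamma<2$, $\mathcal S>0$, assumed such that there exist $1<\tau_1^i<\tau_2^i$ with $p'<0$ on $(1,\infty)$, $p''>0$ on $(1,\tau_1^i)\cup(\tau_2^i,\infty)$, $p''<0$ on $(\tau_1^i,\tau_2^i)$. The function $h$ satisfies $h'(\tau)=\tau p'(\tau)$. $\tau_c$ is the unique $\tau_c\in(\tau_1^i,\infty)$ with $p'(\tau_1^i)=\frac{2h(\tau_c)-2h(\tau_1^i)}{\tau_c^2-(\tau_1^i)^2}$. For $\tau_f\in(\tau_2^i,\tau_c)$, $\tau_{po}(\tau_f)$ is the unique $\tau\in(\tau_1^i,\tau_2^i)$ with $p'(\tau)=\frac{2h(\tau)-2h(\tau_f)}{\tau^2-\tau_f^2}$. For $\sigma\in(\tau_1^i,\tau_2^i)$, $\tau_{pr}(\sigma)$ is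 the unique $\tau\in(1,\sigma)$ with $\frac{2h(\tau)-2h(\sigma)}{\tau^2-\sigma^2}=p'(\sigma)$. *)

(* Defs.v *)
From Stdlib Require Import Reals.
From Coquelicot Require Import Coquelicot.
Open Scope R_scope.

Definition pres (S gamma : R) (tau : R) : R :=
  S / Rpower (tau - 1) gamma - 1 / tau ^ 2.

Definition dpres (S gamma : R) (tau : R) : R := Derive (pres S gamma) tau.
Definition d2pres (S gamma : R) (tau : R) : R := Derive_n (pres S gamma) 2 tau.

Definition chord (h : R -> R) (a b : R) : R :=
  (2 * h a - 2 * h b) / (a ^ 2 - b ^ 2).

(* Main.v *)
Require Import Defs.
From Stdlib Require Import Reals Lra Psatz.
From Coquelicot Require Import Coquelicot.
Open Scope R_scope.

Definition dP (S g x : R) := - S * g / ((x-1) * exp (g * ln (x-1))) + 2 / x^3.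

Lemma pres_der S g x : 1 < x -> is_derive (pres S g) x (dP S g x).
Proof.
intros Hx. unfold pres, Rpower, dP. auto_derive.
- repeat split; try lra; try (apply Rgt_not_eq, exp_pos); nra.
- assert (exp (g * ln (x + - (1))) > 0) by apply exp_pos.
  replace (x + - (1)) with (x - 1) in * by ring. set (E := exp _) in *. field. repeat split; lra.
Qed.

Lemma dpres_ex S g x : 1 < x -> ex_derive (dpres S g) x.
Proof.
intros Hx.
apply (ex_derive_ext_loc (dP S g)).
- assert (Hp : 0 < x - 1) by lra.
  exists (mkposreal _ Hp). intros y Hy. simpl in Hy.
  unfold ball in Hy; simpl in Hy; unfold AbsRing_ball, abs, minus, plus, opp in Hy; simpl in Hy.
  apply Rabs_lt_between in Hy.
  unfold dpres. symmetry. apply is_derive_unique. apply pres_der. lra.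
- unfold dP. auto_derive. repeat split; try lra; try (apply Rgt_not_eq, exp_pos).
  + apply Rmult_integral_contrapositive_currified; [lra| apply Rgt_not_eq, exp_pos].
  + nra.
Qed.

Lemma dpres_der S g x : 1 < x -> is_derive (dpres S g) x (d2pres S g x).
Proof.
intros Hx. apply Derive_correct. apply dpres_ex; auto.
Qed.

Lemma mvt (f df : R -> R) a b : a < b ->
  (forall x, a <= x <= b -> is_derive f x (df x)) ->
  exists c, a < c < b /\ f b - f a = df c * (b - a).
Proof.
intros Hab Hd. destruct (MVT_cor2 f df a b Hab) as [c [Hc1 Hc2]].
- intros c Hc. apply is_derive_Reals. auto.
- exists c. auto.
Qed.

Theorem proposition3p6 (S gamma t1 t2 tc : R) (h : R -> R) :
  1 < gamma < 2 -> 0 < S ->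
  1 < t1 < t2 ->
  (forall t, 1 < t -> dpres S gamma t < 0) ->
  (forall t, (1 < t < t1 \/ t2 < t) -> 0 < d2pres S gamma t) ->
  (forall t, t1 < t < t2 -> d2pres S gamma t < 0) ->
  (forall t, 1 < t -> is_derive h t (t * dpres S gamma t)) ->
  (* tau_c *)
  t1 < tc -> dpres S gamma t1 = chord h tc t1 ->
  (forall t, t1 < t -> dpres S gamma t1 = chord h t t1 -> t = tc) ->
  forall tf, t2 < tf < tc ->
  (* tpo = tau_po(tau_f) *)
  forall tpo, t1 < tpo < t2 -> dpres S gamma tpo = chord h tpo tf ->
  (forall t, t1 < t < t2 -> dpres S gamma t = chord h t tf -> t = tpo) ->
  (* tpr = tau_pr(tau_po(tau_f)) *)
  forall tpr, 1 < tpr < tpo -> chord h tpr tpo = dpres S gamma tpo ->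
  (forall t, 1 < t < tpo -> chord h t tpo = dpres S gamma tpo -> t = tpr) ->
  (forall t, 1 < t < tpr ->
     dpres S gamma t < chord h t tf /\ chord h t tf < dpres S gamma tf) /\
  (forall tb, 1 < tb < tpr ->
     forall t, tb < t < tf -> chord h tf tb < chord h tf t).
Proof.
intros Hg HS Ht12 _ Hcv Hcc Hh _ _ _ tf Htf tpo Htpo Epo _ tpr Htpr Epr _.
set (P := dpres S gamma) in *.
set (P2 := d2pres S gamma) in *.
assert (HP : forall x, 1 < x -> is_derive P x (P2 x)) by (intros; apply dpres_der; auto).
assert (mvtP : forall a b, 1 < a < b -> exists c, a < c < b /\ P b - P a = P2 c * (b - a)).
{ intros a b Hab. apply mvt; [lra|]. intros x Hx. apply HP. lra. }
assert (mvtH : forall al a b, 1 < a < b -> exists c, a < c < b /\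
   2 * h b - 2 * h a + al * (b^2 - a^2) = 2 * c * (P c + al) * (b - a)).
{ intros al a b Hab.
  destruct (mvt (fun x => 2 * h x + al * x^2) (fun x => 2 * (x * P x) + al * (2 * x)) a b) as [c [Hc Hc2]].
  - lra.
  - intros x Hx.
    assert (A : is_derive (fun y => 2 * h y) x (2 * (x * P x))) by (apply is_derive_scal; apply Hh; lra).
    assert (B : is_derive (fun y => al * y^2) x (al * (2 * x))) by (auto_derive; [auto| ring]).
    exact (is_derive_plus _ _ _ _ _ A B).
  - exists c. split; auto. simpl in Hc2. lra. }
assert (inc1 : forall a b, 1 < a -> a < b -> b <= t1 -> P a < P b).
{ intros a b Ha Hab Hb. destruct (mvtP a b) as [c [Hc E]]; [lra|].
  assert (0 < P2 c) by (apply Hcv; lra). nra. }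
assert (dec : forall a b, t1 <= a -> a < b -> b <= t2 -> P b < P a).
{ intros a b Ha Hab Hb. destruct (mvtP a b) as [c [Hc E]]; [lra|].
  assert (P2 c < 0) by (apply Hcc; lra). nra. }
assert (inc2 : forall a b, t2 <= a -> a < b -> P a < P b).
{ intros a b Ha Hab. destruct (mvtP a b) as [c [Hc E]]; [lra|].
  assert (0 < P2 c) by (apply Hcv; lra). nra. }
set (m := P tpo) in *.
assert (chordE : forall a b, 0 < a -> 0 < b -> a <> b -> 2 * h a - 2 * h b = chord h a b * (a^2 - b^2)).
{ intros a b Ha Hb Hab. unfold chord. field.
  intro E. apply Hab. 
  assert ((a - b) * (a + b) = 0) by (simpl in E; nra).
  destruct (Rmult_integral _ _ H); lra. }
assert (E1 : 2 * h tpo - 2 * h tf = m * (tpo^2 - tf^2)).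
{ rewrite Epo. apply chordE; lra. }
assert (E2 : 2 * h tpr - 2 * h tpo = m * (tpr^2 - tpo^2)).
{ rewrite <- Epr. apply chordE; lra. }
destruct (mvtH (-m) tpr tpo) as [xi [Hxi Exi]]; [lra|].
assert (Pxi : P xi = m).
{ assert (2 * xi * (P xi + - m) * (tpo - tpr) = 0) by lra.
  destruct (Rmult_integral _ _ H) as [H1|H1]; [|lra].
  destruct (Rmult_integral _ _ H1) as [H2|H2]; lra. }
assert (xilt : xi < t1).
{ destruct (Rlt_or_le xi t1) as [|Hle]; auto.
  assert (P tpo < P xi) by (apply dec; lra). unfold m in Pxi. lra. }
destruct (mvtH (-m) tpo tf) as [ze [Hze Eze]]; [lra|].
assert (Pze : P ze = m).
{ assert (2 * ze * (P ze + - m) * (tf - tpo) = 0) by lra.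
  destruct (Rmult_integral _ _ H) as [H1|H1]; [|lra].
  destruct (Rmult_integral _ _ H1) as [H2|H2]; lra. }
assert (zegt : t2 < ze).
{ destruct (Rlt_or_le t2 ze) as [|Hle]; auto.
  assert (P ze < P tpo) by (apply dec; lra). unfold m in Pze. lra. }
assert (mlt : m < P tf) by (rewrite <- Pze; apply inc2; lra).
assert (Pless : forall x, 1 < x < tpr -> P x < m).
{ intros x Hx. rewrite <- Pxi. apply inc1; lra. }
assert (Dpos : forall x, 1 < x < tpr -> 2 * h x - 2 * h tpo - m * (x^2 - tpo^2) > 0).
{ intros x Hx. destruct (mvtH (-m) x tpr) as [c [Hc Ec]]; [lra|].
  assert (P c < m) by (apply Pless; lra).
  assert (2 * c * (P c + - m) * (tpr - x) < 0).
  {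
    assert (0 < 2 * c * (tpr - x)) by nra. nra. }
  lra. }
assert (Dnp : forall x, tpr <= x <= tf -> 2 * h x - 2 * h tpo - m * (x^2 - tpo^2) <= 0).
{ intros x Hx.
  destruct (Rle_lt_or_eq_dec tpr x) as [Hx1|Hx1]; [lra| |subst; lra].
  destruct (Rle_lt_or_eq_dec x tf) as [Hx2|Hx2]; [lra| |subst; lra].
  destruct (Rlt_or_le x tpo) as [Hx3|Hx3].
  - apply Rnot_lt_le. intro Hpos.
    destruct (mvtH (-m) tpr x) as [c1 [Hc1 Ec1]]; [lra|].
    destruct (mvtH (-m) x tpo) as [c2 [Hc2 Ec2]]; [lra|].
    assert (P c1 > m).
    { assert (0 < 2 * c1 * (P c1 + - m) * (x - tpr)) by lra.
      assert (0 < 2 * c1 * (x - tpr)) by nra. nra. }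
    assert (P c2 < m).
    { assert (2 * c2 * (P c2 + - m) * (tpo - x) < 0) by lra.
      assert (0 < 2 * c2 * (tpo - x)) by nra. nra. }
    destruct (Rlt_or_le c2 t1) as [Hc|Hc].
    + assert (P c1 < P c2) by (apply inc1; lra). lra.
    + assert (P tpo < P c2) by (apply dec; lra). unfold m in *. lra.
  - destruct (Rle_lt_or_eq_dec tpo x) as [Hx4|Hx4]; [lra| |subst; lra].
    apply Rnot_lt_le. intro Hpos.
    destruct (mvtH (-m) tpo x) as [c1 [Hc1 Ec1]]; [lra|].
    destruct (mvtH (-m) x tf) as [c2 [Hc2 Ec2]]; [lra|].
    assert (P c1 > m).
    { assert (0 < 2 * c1 * (P c1 + - m) * (x - tpo)) by lra.
      assert (0 < 2 * c1 * (x - tpo)) by nra. nra. }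
    assert (P c2 < m).
    { assert (2 * c2 * (P c2 + - m) * (tf - x) < 0) by lra.
      assert (0 < 2 * c2 * (tf - x)) by nra. nra. }
    destruct (Rlt_or_le t2 c1) as [Hc|Hc].
    + assert (P c1 < P c2) by (apply inc2; lra). lra.
    + assert (P c1 < P tpo) by (apply dec; lra). unfold m in *. lra. }
split.
- intros t Ht.
  assert (Ek := chordE t tf ltac:(lra) ltac:(lra) ltac:(lra)).
  set (k := chord h t tf) in *.
  assert (HD := Dpos t Ht).
  assert (Hd : 0 < tf^2 - t^2) by nra.
  assert (km : (m - k) * (tf^2 - t^2) = 2 * h t - 2 * h tpo - m * (t^2 - tpo^2)) by lra.
  split.
  + destruct (mvtH (- P t) t tpr) as [c [Hc Ec]]; [lra|].
    assert (P t < P c) by (apply inc1; lra).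
    assert (0 < 2 * c * (P c + - P t) * (tpr - t)).
    { assert (0 < 2 * c * (tpr - t)) by nra. nra. }
    assert (Pt := Pless t Ht).
    assert ((m - P t) * (tpr^2 - t^2) < (m - P t) * (tf^2 - t^2)).
    { apply Rmult_lt_compat_l; [lra|]. nra. }
    nra.
  + nra.
- intros tb Htb t Ht.
  assert (Eb := chordE tf tb ltac:(lra) ltac:(lra) ltac:(lra)).
  assert (Et := chordE tf t ltac:(lra) ltac:(lra) ltac:(lra)).
  set (sb := chord h tf tb) in *.
  set (kt := chord h tf t) in *.
  assert (HD := Dpos tb Htb).
  assert (Hdb : 0 < tf^2 - tb^2) by nra.
  assert (Hdt : 0 < tf^2 - t^2) by nra.
  assert (sbm : sb < m) by nra.
  set (G := fun x => 2 * h x - 2 * h tf + sb * (tf^2 - x^2)).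
  assert (Gform : forall x, G x = (2 * h x - 2 * h tpo - m * (x^2 - tpo^2)) - (m - sb) * (tf^2 - x^2)).
  { intros x. unfold G. lra. }
  assert (Gneg1 : forall x, tpr <= x < tf -> G x < 0).
  { intros x Hx. rewrite Gform. pose proof (Dnp x ltac:(lra)).
    assert (0 < tf^2 - x^2) by nra. nra. }
  assert (Gt : G t < 0).
  { destruct (Rlt_or_le t tpr) as [Hlt|Hle]; [|apply Gneg1; lra].
    apply Rnot_le_lt. intro HG.
    assert (Gb : G tb = 0) by (unfold G; lra).
    assert (Gpr := Gneg1 tpr ltac:(lra)).
    destruct (mvtH (-sb) tb t) as [c1 [Hc1 Ec1]]; [lra|].
    destruct (mvtH (-sb) t tpr) as [c2 [Hc2 Ec2]]; [lra|].
    unfold G in HG, Gb, Gpr.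
    assert (P c1 >= sb).
    { assert (0 <= 2 * c1 * (P c1 + - sb) * (t - tb)) by lra.
      assert (0 < 2 * c1 * (t - tb)) by nra. nra. }
    assert (P c2 < sb).
    { assert (2 * c2 * (P c2 + - sb) * (tpr - t) < 0) by lra.
      assert (0 < 2 * c2 * (tpr - t)) by nra. nra. }
    assert (P c1 < P c2) by (apply inc1; lra). lra. }
  unfold G in Gt. nra.
Qed.
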